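(* Let $B$ and $T$ be disjoint finite sets with a bijection $b\mapsto \bar b$ from $B$ to $T$, let $A$ be a $B\times T$ matrix over $GF(2)$ with $A_{b,\bar b}=0$ for all $b\in B$, and let $E=(I\mid A)$ be the $B\times(B\cup T)$ matrix whose $B$-columns form the identity and whose $T$-columns form $A$. Let $M$ be the column matroid of $E$ and $\Omega=\{\{b,\bar b\}: b\in B\}$. Then $(M,\Omega)$ is a $2$-sheltering matroid if and only if $A$ is symmetric, i.e. $A_{b,\bar c}=A_{c,\bar b}$ for all $b,c\in B$.
   Context: A sheltering matroid is a pair $(M,\Omega)$ where $M$ is a matroid on a finite set $U$ and $\Omega$ a partition of $U$ such that for every independent set $I$ of $M$ meeting each class of $\Omega$ in at most one element, and every $2$-element subset $\{x,y\}$ of a class $\omega$ with $\omega\cap I=\emptyset$, $I\cup\{x\}$ or $I\cup\{y\}$ is independent in $M$. It is a $2$-sheltering matroid if all classes have size $2$. *)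

(* Defs.v *)
From HB Require Import structures.
From mathcomp Require Import all_boot all_order all_algebra.
Set Implicit Arguments. Unset Strict Implicit. Unset Printing Implicit Defensive.
Import GRing.Theory.
Local Open Scope ring_scope.

Definition col_indep (R U : finType) (E : R -> U -> 'F_2) (I : {set U}) : Prop :=
  forall c : U -> 'F_2,
    (forall x, x \notin I -> c x = 0) ->
    (forall r, \sum_(x in I) c x * E r x = 0) ->
    forall x, c x = 0.

Definition sheltering (U : finType) (indep : {set U} -> Prop)
    (Omega : {set {set U}}) : Prop :=
  partition Omega [set: U] /\
  forall I : {set U}, indep I ->
    (forall w, w \in Omega -> #|w :&: I| <= 1)%N ->
    forall w, w \in Omega -> w :&: I = set0 ->
    forall x y, x \in w -> y \in w -> x != y ->
      indep (x |: I) \/ indep (y |: I).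

Definition two_sheltering (U : finType) (indep : {set U} -> Prop)
    (Omega : {set {set U}}) : Prop :=
  sheltering indep Omega /\ (forall w, w \in Omega -> #|w| = 2%N).

Definition IA_matrix (B T : finType) (A : B -> T -> 'F_2) (b : B) (x : B + T)
    : 'F_2 :=
  match x with
  | inl c => (b == c)%:R
  | inr t => A b t
  end.

Definition pair_partition (B T : finType) (f : B -> T) : {set {set (B + T)}} :=
  [set [set inl b; inr (f b)] | b : B].

(* Main.v *)
Require Import Defs.
From HB Require Import structures.
From mathcomp Require Import all_boot all_order all_algebra.
From Stdlib Require Import Classical.
Import GRing.Theory.
Local Open Scope ring_scope.

Lemma F2_1 (x : 'F_2) : x != 0 -> x = 1.
Proof. by case: x => [[|[|]]] //= H _; apply/val_inj. Qed.
Lemma F2_2 (x : 'F_2) : x + x = 0.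
Proof. by case: x => [[|[|]]] //= H; apply/val_inj. Qed.

Section Aux.
Variables (B T : finType) (A : B -> T -> 'F_2).

Lemma comb_eq (c : B + T -> 'F_2) (S : {set B + T}) r :
  (forall x, x \notin S -> c x = 0) ->
  \sum_(x in S) c x * IA_matrix A r x = c (inl r) + \sum_t c (inr t) * A r t.
Proof.
move=> Hc.
rewrite big_mkcond /= (eq_bigr (fun x => c x * IA_matrix A r x)); last first.
  by move=> x _; case: ifP => // /negbT /Hc ->; rewrite mul0r.
rewrite big_sumType /=; congr (_ + _).
rewrite (bigD1 r) //= eqxx mulr1 big1 ?addr0 // => x Hx.
by rewrite eq_sym (negbTE Hx) mulr0.
Qed.

Lemma indepP (S : {set B + T}) :
  col_indep (IA_matrix A) S <->
  (forall c : B + T -> 'F_2, (forall x, x \notin S -> c x = 0) ->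
    (forall r, c (inl r) + \sum_t c (inr t) * A r t = 0) -> forall x, c x = 0).
Proof.
split=> H c Hc Hl; apply: H => // r; [by rewrite (comb_eq _ _ r Hc) | by rewrite -(comb_eq _ _ r Hc)].
Qed.

Lemma not_indep (S : {set B + T}) : ~ col_indep (IA_matrix A) S ->
  exists c : B + T -> 'F_2, [/\ (forall x, x \notin S -> c x = 0),
    (forall r, c (inl r) + \sum_t c (inr t) * A r t = 0) & exists x, c x != 0].
Proof.
move=> H; apply: NNPP => H2; apply: H; apply/indepP => c Hc Hl x.
case: (eqVneq (c x) 0) => // Hx; exfalso; apply: H2; exists c; split=> //.
by exists x.
Qed.

Lemma card_pair_le1 (a b : B + T) (I : {set B + T}) :
  ~ (a \in I /\ b \in I) -> (#|[set a; b] :&: I| <= 1)%N.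
Proof.
move=> H; case: (boolP (a \in I)) => Ha.
  have Hb : b \notin I by apply/negP => Hb; apply: H.
  rewrite -(cards1 a); apply: subset_leq_card; apply/subsetP => x.
  rewrite !inE; case/andP => /orP [] /eqP -> // Hx.
  by rewrite Hx in Hb.
rewrite -(cards1 b); apply: subset_leq_card; apply/subsetP => x.
rewrite !inE; case/andP => /orP [] /eqP -> // Hx.
by rewrite Hx in Ha.
Qed.

End Aux.
Section Main.
Variables (B T : finType) (f : B -> T) (Hf : bijective f) (A : B -> T -> 'F_2).

Lemma lin_reindex (c : B + T -> 'F_2) r :
  c (inl r) + \sum_t c (inr t) * A r t = 0 ->
  c (inl r) = - \sum_s c (inr (f s)) * A r (f s).
Proof.
rewrite (reindex f (onW_bij _ Hf)) /= => H.
by apply/eqP; rewrite -addr_eq0 H.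
Qed.

Lemma sym_ident (Hsym : forall b c : B, A b (f c) = A c (f b))
  (c d : B + T -> 'F_2) :
  (forall r, c (inl r) + \sum_t c (inr t) * A r t = 0) ->
  (forall r, d (inl r) + \sum_t d (inr t) * A r t = 0) ->
  \sum_r d (inr (f r)) * c (inl r) = \sum_r c (inr (f r)) * d (inl r).
Proof.
move=> Hc Hd.
under eq_bigr => r _ do rewrite (lin_reindex _ _ (Hc r)) mulrN mulr_sumr.
under [RHS]eq_bigr => r _ do rewrite (lin_reindex _ _ (Hd r)) mulrN mulr_sumr.
rewrite !sumrN; congr (- _).
rewrite exchange_big /=; apply: eq_bigr => r _; apply: eq_bigr => s _.
by rewrite Hsym mulrCA !mulrA.
Qed.
End Main.
Section Main.
Variables (B T : finType) (f : B -> T) (Hf : bijective f) (A : B -> T -> 'F_2).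

Lemma shelter_pair (Hsym : forall b c : B, A b (f c) = A c (f b))
  (I : {set B + T}) (HI : col_indep (IA_matrix A) I)
  (Hcard : forall r, ~ (inl r \in I /\ inr (f r) \in I)) b
  (Hb1 : inl b \notin I) (Hb2 : inr (f b) \notin I) :
  col_indep (IA_matrix A) (inl b |: I) \/ col_indep (IA_matrix A) (inr (f b) |: I).
Proof.
have finj := bij_inj Hf.
apply: NNPP => /not_or_and [/not_indep [c [Hc Hlc [x0 Hx0]]] /not_indep [d [Hd Hld [x1 Hx1]]]].
move/indepP: HI => HI.
have c1 : c (inl b) = 1.
  apply: F2_1; apply/eqP => Hcb; move/eqP: Hx0; apply; apply: (HI c) => // x Hx.
  case: (eqVneq x (inl b)) => [-> //|Hxb]; apply: Hc; by rewrite !inE negb_or Hxb.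
have d1 : d (inr (f b)) = 1.
  apply: F2_1; apply/eqP => Hcb; move/eqP: Hx1; apply; apply: (HI d) => // x Hx.
  case: (eqVneq x (inr (f b))) => [-> //|Hxb]; apply: Hd; by rewrite !inE negb_or Hxb.
have := @sym_ident _ _ _ Hf _ Hsym _ _ Hlc Hld.
rewrite (bigD1 b) //= [X in _ = X](bigD1 b) //= big1; last first.
  move=> r Hrb; case: (boolP (inl r \in I)) => Hr.
    have Hr2 : inr (f r) \notin I by apply/negP => H; apply: (Hcard r).
    rewrite Hd ?mul0r // !inE negb_or Hr2 andbT.
    by apply/eqP => [[/finj /eqP]]; rewrite (negbTE Hrb).
  by rewrite Hc ?mulr0 // !inE negb_or Hr andbT.
rewrite big1; last first.
  move=> r Hrb; case: (boolP (inl r \in I)) => Hr.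
    have Hr2 : inr (f r) \notin I by apply/negP => H; apply: (Hcard r).
    by rewrite Hc ?mul0r // !inE negb_or Hr2 andbT.
  by rewrite Hd ?mulr0 // !inE negb_or Hr andbT.
rewrite (Hc (inr (f b))) ?c1 ?d1 //; by rewrite !inE negb_or Hb2.
Qed.
End Main.

Lemma sum_delta (T : finType) (t0 : T) (F : T -> 'F_2) :
  \sum_t (t == t0)%:R * F t = F t0.
Proof.
by rewrite (bigD1 t0) //= eqxx mul1r big1 ?addr0 // => t /negbTE ->; rewrite mul0r.
Qed.

Section Main.
Variables (B T : finType) (f : B -> T) (Hf : bijective f) (A : B -> T -> 'F_2).
Hypothesis (Hdiag : forall b : B, A b (f b) = 0).

Lemma shelter_sym
  (Hsh : forall I : {set B + T}, col_indep (IA_matrix A) I ->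
    (forall w, w \in pair_partition f -> #|w :&: I| <= 1)%N ->
    forall w, w \in pair_partition f -> w :&: I = set0 ->
    forall x y, x \in w -> y \in w -> x != y ->
      col_indep (IA_matrix A) (x |: I) \/ col_indep (IA_matrix A) (y |: I))
  b c (Hbc : b != c) (H1 : A b (f c) = 1) (H0 : A c (f b) = 0) : False.
Proof.
have finj := bij_inj Hf.
pose I := [set x : B + T | match x with inl x => (x != b) && (x != c) | inr t => t == f c end].
have HI : col_indep (IA_matrix A) I.
  apply/indepP => d Hd Hl.
  have Hdb : d (inl b) = 0 by apply: Hd; rewrite inE eqxx.
  have Hdc : d (inl c) = 0 by apply: Hd; rewrite inE eqxx andbF.
  have Hdt t : t != f c -> d (inr t) = 0 by move=> Ht; apply: Hd; rewrite inE.
  have Hs r : \sum_t d (inr t) * A r t = d (inr (f c)) * A r (f c).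
    rewrite (bigD1 (f c)) //= big1 ?addr0 // => t Ht; by rewrite Hdt ?mul0r.
  have Hfc : d (inr (f c)) = 0 by have := Hl b; rewrite Hs Hdb H1 add0r mulr1.
  case=> [r | t].
    by have := Hl r; rewrite Hs Hfc mul0r addr0.
  by case: (eqVneq t (f c)) => [->|/Hdt].
have Hw : [set inl b; inr (f b)] \in pair_partition f by apply/imsetP; exists b.
have Hcard : forall w, w \in pair_partition f -> (#|w :&: I| <= 1)%N.
  move=> w /imsetP [r _ ->]; apply: card_pair_le1; rewrite !inE.
  by case=> /andP [_ Hrc] /eqP /finj /eqP; rewrite (negbTE Hrc).
have Hdis : [set inl b; inr (f b)] :&: I = set0.
  apply/setP => x; rewrite !inE; apply/negbTE/negP; case/andP => /orP [] /eqP ->.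
    by rewrite eqxx.
  by move/eqP/finj/eqP; rewrite (negbTE Hbc).
have [] := Hsh I HI Hcard _ Hw Hdis (inl b) (inr (f b)); rewrite ?inE ?eqxx ?orbT //.
- move/indepP => H.
  pose c0 (z : B + T) : 'F_2 := match z with inl x => if x == c then 0 else A x (f c)
                                | inr t => (t == f c)%:R end.
  suff : c0 (inr (f c)) = 0 by rewrite /c0 eqxx.
  apply: H; rewrite /c0.
    case=> [x | t]; rewrite !inE /=.
      by case: (eqVneq x c) => // Hxc; case: (eqVneq x b) => [->|Hxb]; rewrite ?eqxx // ?Hxc ?Hxb ?orbT. 
    by case: (eqVneq t (f c)).
  move=> r; rewrite sum_delta; case: (eqVneq r c) => [->|_]; first by rewrite Hdiag addr0.
  exact: F2_2.
- move/indepP => H.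
  pose c0 (z : B + T) : 'F_2 := match z with inl x => if (x == b) || (x == c) then 0 else A x (f b)
                                | inr t => (t == f b)%:R end.
  suff : c0 (inr (f b)) = 0 by rewrite /c0 eqxx.
  apply: H; rewrite /c0.
    case=> [x | t]; rewrite !inE /=.
      by case: (eqVneq x c) => //; case: (eqVneq x b).
    case: (eqVneq t (f b)) => [->|//]; by rewrite eqxx.
  move=> r; rewrite sum_delta; case: (eqVneq r b) => [->|_]; first by rewrite Hdiag addr0.
  case: (eqVneq r c) => [->|_]; first by rewrite H0 addr0.
  exact: F2_2.
Qed.
End Main.

Lemma F2_cases (x : 'F_2) : x = 0 \/ x = 1.
Proof. by case: (eqVneq x 0) => [|/F2_1]; [left|right]. Qed.

Lemma pair_part (B T : finType) (f : B -> T) (Hf : bijective f) :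
  partition (pair_partition f) [set: B + T].
Proof.
have finj := bij_inj Hf.
apply/and3P; split.
- apply/eqP/setP => x; rewrite inE; apply/bigcupP.
  case: x => [b|t].
    by exists [set inl b; inr (f b)]; [apply/imsetP; exists b | rewrite !inE eqxx].
  case: Hf => g Hgf Hfg.
  by exists [set inl (g t); inr (f (g t))]; [apply/imsetP; exists (g t) | rewrite Hfg !inE eqxx orbT].
- apply/trivIsetP => A1 A2 /imsetP [b1 _ ->] /imsetP [b2 _ ->] Hne.
  have Hb : b1 != b2 by apply: contraNneq Hne => ->.
  rewrite -setI_eq0; apply/eqP/setP => x; rewrite !inE; apply/negbTE/negP.
  case/andP => /orP [] /eqP -> /orP [] /eqP //.
    by case=> E; rewrite E eqxx in Hb.
  by case=> /finj E; rewrite E eqxx in Hb.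
- apply/negP => /imsetP [b _ H].
  have : inl b \in (set0 : {set B + T}) by rewrite H !inE eqxx.
  by rewrite inE.
Qed.

Theorem lemma2p6 (B T : finType) (f : B -> T) (Hf : bijective f)
    (A : B -> T -> 'F_2) (Hdiag : forall b : B, A b (f b) = 0) :
  two_sheltering (col_indep (IA_matrix A)) (pair_partition f) <->
  (forall b c : B, A b (f c) = A c (f b)).
Proof.
split.
- case=> [[Hpart Hsh] Hsz] b c.
  case: (eqVneq b c) => [->//|Hbc].
  case: (F2_cases (A b (f c))) => H1; case: (F2_cases (A c (f b))) => H2;
    rewrite H1 H2 //; exfalso.
    by apply: (@shelter_sym _ _ _ Hf _ Hdiag Hsh c b) => //; rewrite eq_sym.
  exact: (@shelter_sym _ _ _ Hf _ Hdiag Hsh b c Hbc).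
- move=> Hsym; split; [split|].
  + exact: pair_part.
  + move=> I HI Hc w /imsetP [b _ ->] Hdis x y Hx Hy Hxy.
    have Hcard : forall r, ~ (inl r \in I /\ inr (f r) \in I).
      move=> r [H1 H2].
      have Hw : [set inl r; inr (f r)] \in pair_partition f by apply/imsetP; exists r.
      have := Hc _ Hw.
      have : [set inl r; inr (f r)] \subset [set inl r; inr (f r)] :&: I.
        by apply/subsetP => z; rewrite !inE => /orP [] /eqP ->; rewrite ?H1 ?H2 eqxx ?orbT.
      by move/subset_leq_card; rewrite cards2 => /leq_trans H /H.
    have Hb1 : inl b \notin I.
      apply/negP => H; have : inl b \in [set inl b; inr (f b)] :&: I by rewrite inE H !inE eqxx.
      by rewrite Hdis inE.
    have Hb2 : inr (f b) \notin I.
      apply/negP => H; have : inr (f b) \in [set inl b; inr (f b)] :&: I by rewrite inE H !inE eqxx orbT.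
      by rewrite Hdis inE.
    have := @shelter_pair _ _ _ Hf _ Hsym I HI Hcard b Hb1 Hb2.
    move: Hx Hy Hxy; rewrite !inE => /orP [] /eqP -> /orP [] /eqP ->; rewrite ?eqxx //.
    by move=> _ [] ?; [right|left].
  + by move=> w /imsetP [b _ ->]; rewrite cards2.
Qed.
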